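(* Let $X$ be a regular space. If $t(Q_{P}(X))=\aleph_0$, then $X$ is a Lindelöf space.
   Context: A function $f\colon X\to Y$ between topological spaces is quasi-continuous at $x\in X$ if for every open $U\ni x$ and every open $V\ni f(x)$ there is a non-empty open $G\subseteq U$ with $f(G)\subseteq V$; $f$ is quasi-continuous if it is so at every point. $Q_{P}(X)$ is the set of quasi-continuous functions $X\to\mathbb{R}$ with the topology of point-wise convergence (subspace topology from $\mathbb{R}^X$). The tightness of a space $Z$ is $t(Z)=\sup_{z\in Z} t(z,Z)$, where $t(z,Z)=\aleph_0+\sup\{a(z,A): A\subseteq Z,\ z\in\overline{A}\}$ and $a(z,A)=\min\{|B|: B\subseteq A,\ z\in\overline{B}\}$. A space is Lindelöf if every open cover has a countable subcover. *)

(* Defs.v *)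
From HB Require Import structures.
From mathcomp Require Import all_boot all_order all_algebra.
From mathcomp Require Import all_classical all_reals all_analysis.
Set Implicit Arguments. Unset Strict Implicit. Unset Printing Implicit Defensive.
Import Order.TTheory GRing.Theory Num.Theory numFieldNormedType.Exports.
Local Open Scope classical_set_scope.

Definition quasi_continuous_at (X Y : topologicalType) (f : X -> Y) (x : X) :=
  forall U V : set _, open U -> U x -> open V -> V (f x) ->
    exists G : set X, [/\ open G, G !=set0, G `<=` U & f @` G `<=` V].

Definition quasi_continuous (X Y : topologicalType) (f : X -> Y) :=
  forall x, quasi_continuous_at f x.

Definition QP_set (R : realType) (X : topologicalType) : set {ptws X -> R} :=
  [set f | quasi_continuous (Y := R) (f : X -> R)].


Definition countable_tightness_on (Z : topologicalType) (S : set Z) :=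
  forall (z : Z) (A : set Z), S z -> A `<=` S -> closure A z ->
    exists2 B : set Z, B `<=` A & countable B /\ closure B z.

Definition lindelof (X : topologicalType) :=
  forall F : set (set X), (forall U, F U -> open U) ->
    \bigcup_(U in F) U = setT ->
    exists2 G : set (set X), G `<=` F & countable G /\ \bigcup_(U in G) U = setT.

Definition subspace_countable_tightness (T : topologicalType) (S : set T) :=
  countable_tightness_on (S : set (subspace S)).

(* t(Q_P(X)) = aleph_0: Q_P(X) is the set of quasi-continuous functions with
   the subspace topology of R^X = {ptws X -> R} (pointwise convergence). *)
Definition QP_countable_tightness (R : realType) (X : topologicalType) :=
  @subspace_countable_tightness {ptws X -> R} (@QP_set R X).

(* Main.v *)
Require Import Defs.
From HB Require Import structures.
From mathcomp Require Import all_boot all_order all_algebra.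
From mathcomp Require Import all_classical all_reals all_analysis.
From mathcomp Require Import lra.
From Stdlib Require Lists.List.
Import Order.TTheory GRing.Theory Num.Theory numFieldNormedType.Exports.
Local Open Scope classical_set_scope.

Section helpers.
Context (R : realType) (X : topologicalType).

Definition Us (s : seq (set X)) : set X := foldr setU set0 s.

Lemma Us_open s : (forall V, List.In V s -> open V) -> open (Us s).
Proof.
elim: s => [|V s IH] H /=; first exact: open0.
apply: openU; first by apply: H; left.
by apply: IH => W HW; apply: H; right.
Qed.

Lemma closure_Us s x : closure (Us s) x -> exists V, List.In V s /\ closure V x.
Proof.
elim: s => [|V s IH] /=; first by rewrite closure0.
rewrite closureU => -[Hx|Hx]; first by exists V; split => //; left.
by have [W [HW HWx]] := IH Hx; exists W; split => //; right.
Qed.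

Definition hh (s : seq (set X)) : X -> R :=
  fun x => if `[< closure (Us s) x >] then 0%R else 1%R.

Lemma hh_qc s : (forall V, List.In V s -> open V) -> @quasi_continuous X R (hh s).
Proof.
move=> Hop x U V oU Ux oV Vhx.
rewrite /hh in Vhx; case: (asboolP (closure (Us s) x)) Vhx => [cx|ncx] Vhx.
- have [y [Oy Uy]] : (Us s `&` U) !=set0.
    by apply: cx; apply: open_nbhs_nbhs; split.
  exists (U `&` Us s); split.
  + by apply: (@openI X) => //; exact: Us_open.
  + by exists y.
  + by move=> ? [].
  + move=> _ [w [_ Ow] <-]; rewrite /hh; case: asboolP => [_|nw] //.
    by exfalso; apply: nw; apply: subset_closure.
- exists (U `&` ~` closure (Us s)); split.
  + apply: (@openI X) => //; rewrite openC; exact: closed_closure.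
  + by exists x.
  + by move=> ? [].
  + by move=> _ [w [_ nw] <-]; rewrite /hh; case: asboolP.
Qed.

Lemma half_nlt1 : ~ (1 < 1/2 :> R)%R.
Proof. move=> h; lra. Qed.

End helpers.
Arguments Us {X}. Arguments Us_open {X}. Arguments closure_Us {X}.
Arguments hh R {X}. Arguments hh_qc R {X}.

Theorem mainTheorem3 (R : realType) (X : topologicalType) :
  regular_space X -> hausdorff_space X ->
  QP_countable_tightness R X ->
  lindelof X.
Proof.
move=> reg _ tight F Fop Fcov.
pose Freg := [set V : set X | open V /\ exists2 U, F U & closure V `<=` U].
have cov x : exists2 V, Freg V & V x.
  have : (\bigcup_(U in F) U) x by rewrite Fcov.
  case=> U FU Ux.
  have nU : nbhs x U by apply: open_nbhs_nbhs; split => //; apply: Fop.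
  have [W Wx WU] := reg x U nU.
  exists W°; last exact: Wx.
  split; first exact: open_interior.
  exists U => //; apply: subset_trans WU; apply: closureS; exact: interior_subset.
pose z : {ptws X -> R} := fun _ => 0%R.
pose Sq := @QP_set R X.
pose good (k : seq X) (s : seq (set X)) :=
  List.Forall Freg s /\ forall x, List.In x k -> Us s x.
pose D (k : seq X) : set {ptws X -> R} := [set (hh R s : {ptws X -> R}) | s in good k].
pose A := D [::].
have Dex k : exists s, good k s.
  elim: k => [|x k [s [Hs Hk]]]; first by exists [::]; split => //; constructor.
  have [V FV Vx] := cov x.
  exists (V :: s); split; first by constructor.
  move=> y /= [<-|Hy]; first by left.
  by right; apply: Hk.
have AS : A `<=` Sq.
  move=> _ [s [Hs _] <-]; apply: hh_qc => V HV.
  by have := proj1 (List.Forall_forall Freg s) Hs V HV => -[].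
have Sz : Sq z.
  move=> x U V oU Ux oV Vz; exists U; split => //; first by exists x.
  by move=> _ [y _ <-].
pose G := filter_from [set: seq X] D.
have GF : ProperFilter G.
  apply: filter_from_proper; last first.
    move=> k _; have [s Hs] := Dex k; exists (hh R s); exists s => //.
  apply: filter_from_filter; first by exists [::].
  move=> i j _ _; exists (i ++ j) => //.
  move=> _ [s [Hs Hk] <-]; split; exists s => //; split => // x Hx; apply: Hk;
    apply: List.in_or_app; [left|right] => //.
have Gz : G --> z.
  apply/(@pointwise_cvgP X R G z) => t P /= Pz.
  exists [:: t] => //.
  move=> _ [s [Hs Hk] <-] /=; rewrite /hh; case: asboolP => [_|nc].
    exact: (nbhs_singleton Pz).
  by exfalso; apply: nc; apply: subset_closure; apply: Hk; left.
have clA : closure (A : set (subspace Sq)) (z : subspace Sq).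
  move=> B; case: (nbhs_subspaceP Sq (z : subspace Sq)) => [_|nSz]; last by case: (nSz Sz).
  move=> WB.
  have [k _ Dk] := Gz _ WB.
  have [s Hs] := Dex k.
  exists (hh R s); split.
    by exists s => //; split; [exact: (proj1 Hs)|].
  apply: (Dk (hh R s)); first by exists s.
  by apply: AS; exists s => //; split; [exact: (proj1 Hs)|].
rewrite /QP_countable_tightness /subspace_countable_tightness
  /countable_tightness_on in tight.
have [B0 B0A [cB0 clB0]] := tight z A Sz AS clA.
have [sb Hsb] : exists sb : {ptws X -> R} -> seq (set X),
    forall b, A b -> List.Forall Freg (sb b) /\ hh R (sb b) = b.
  have H : forall b, exists s, A b -> List.Forall Freg s /\ hh R s = b.
  move=> b; case: (pselect (A b)) => [[s [Hs _] <-]|nAb].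
    by exists s.
  by exists [::].
  by have [f Hf] := choice H; exists f.
have [phi Hphi] : exists phi : set X -> set X,
    forall V, Freg V -> F (phi V) /\ closure V `<=` phi V.
  have H : forall V, exists U, Freg V -> F U /\ closure V `<=` U.
  move=> V; case: (pselect (Freg V)) => [[_ [U FU cU]]|nV].
    by exists U.
  by exists set0.
  by have [f Hf] := choice H; exists f.
have FregIn b V : B0 b -> List.In V (sb b) -> Freg V.
  move=> B0b InV; have [Hs _] := Hsb b (B0A _ B0b).
  exact: (proj1 (List.Forall_forall Freg _) Hs V InV).
exists (phi @` \bigcup_(b in B0) [set V | List.In V (sb b)]).
  move=> _ [V [b B0b InV] <-].
  exact: (proj1 (Hphi V (FregIn b V B0b InV))).
split.
  apply: card_le_trans (card_image_le _ _) _.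
  apply: bigcup_countable => // b _.
  apply: (card_le_trans (B := range (fun n : nat => List.nth n (sb b) set0))).
    apply: subset_card_le => V /(List.In_nth _ _ set0) [n [_ <-]].
    by exists n.
  exact: card_image_le.
rewrite eqEsubset; split => // x _.
pose N := [set f : {ptws X -> R} | ((f x : R) < 1/2)%R].
have nN : nbhs (z : subspace Sq) N.
  case: (nbhs_subspaceP Sq (z : subspace Sq)) => [_|nSz]; last by case: (nSz Sz).
  have : nbhs z N.
    have h1 : (proj x z < 1/2)%R by rewrite /proj /z; lra.
    exact: (@proj_continuous X (fun _ => R) x z _ (lt_nbhsl h1)).
  by rewrite /within; apply: filterS => f Nf _.
have [b [B0b Nb]] := clB0 N nN.
have [Hs hb] := Hsb b (B0A _ B0b).
have cx : closure (Us (sb b)) x.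
  have Nb2 : N (hh R (sb b)) by rewrite hb.
  move: Nb2; rewrite /N /= /hh; case: asboolP => [c _|_ h]; [exact: c | exfalso; exact: (@half_nlt1 R h)].
have [V [InV cV]] := closure_Us _ _ cx.
have FV := FregIn b V B0b InV.
exists (phi V); first by exists V => //; exists b.
exact: (proj2 (Hphi V FV)) _ cV.
Qed.
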